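(* Let $p\ge1$ and $n\ge p$ be integers. Then $S_{n,a}=S_{n+1,s}$. More precisely: - If $z$ is an odd eigenfunction of order $n$ with eigenvalue $\Lambda$, then $w(x)=\int_{-1}^x z(\xi)\,d\xi$ is an even eigenfunction of order $n+1$ with eigenvalue $\Lambda$. - Conversely, if $w$ is an even eigenfunction of order $n+1$ with eigenvalue $\Lambda$, then $w'$ is an odd eigenfunction of order $n$ with eigenvalue $\Lambda$.
   Context: Fix an integer $p\ge1$. For an integer $k\ge p$ and real $\Lambda$, the differential operator on $[-1,1]$ is $$L^{2k}(\Lambda)=(-1)^k\frac{d^{2k}}{dx^{2k}}-\Lambda(-1)^{k-p}\frac{d^{2k-2p}}{dx^{2k-2p}}.$$ A real number $\Lambda$ is an eigenvalue of order $k$ if there is a real $z\in C^{2k}[-1,1]$, $z\not\equiv0$, such that: - $L^{2k}(\Lambda)z=0$ on $[-1,1]$, and - $z^{(j)}(\pm1)=0$ for $j=0,\dots,k-1$. Such a $z$ is an eigenfunction of order $k$. $S_{k,s}$ (resp. $S_{k,a}$) is the set of eigenvalues of order $k$ admitting an even (resp. odd) eigenfunction of order $k$. *)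

(* Defs.v *)
From Stdlib Require Import Reals Lra Lia.
Open Scope R_scope.

Definition Icl (x : R) : Prop := -1 <= x <= 1.

Definition deriv_on (f : R -> R) (x l : R) : Prop :=
  forall eps, 0 < eps -> exists delta, 0 < delta /\
    forall h, h <> 0 -> Rabs h < delta -> Icl (x + h) ->
      Rabs ((f (x + h) - f x) / h - l) < eps.

Definition cont_on (f : R -> R) (x : R) : Prop :=
  forall eps, 0 < eps -> exists delta, 0 < delta /\
    forall y, Icl y -> Rabs (y - x) < delta -> Rabs (f y - f x) < eps.

Definition Cm_derivs (m : nat) (z : R -> R) (d : nat -> R -> R) : Prop :=
  (forall x, Icl x -> d 0%nat x = z x) /\
  (forall j x, (j < m)%nat -> Icl x -> deriv_on (d j) x (d (S j) x)) /\
  (forall x, Icl x -> cont_on (d m) x).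

(* z is an eigenfunction of order k (k >= p) with eigenvalue Lam for
   L^{2k}(Lam) = (-1)^k D^{2k} - Lam (-1)^{k-p} D^{2k-2p}. *)
Definition eigenfunction (p k : nat) (Lam : R) (z : R -> R) : Prop :=
  (p <= k)%nat /\
  exists d : nat -> R -> R,
    Cm_derivs (2 * k) z d /\
    (exists x, Icl x /\ z x <> 0) /\
    (forall x, Icl x ->
       (-1) ^ k * d (2 * k)%nat x
       - Lam * (-1) ^ (k - p) * d (2 * k - 2 * p)%nat x = 0) /\
    (forall j, (j < k)%nat -> d j 1 = 0 /\ d j (-1) = 0).

Definition is_even (z : R -> R) : Prop := forall x, Icl x -> z (- x) = z x.
Definition is_odd (z : R -> R) : Prop := forall x, Icl x -> z (- x) = - z x.

Definition in_S_s (p k : nat) (Lam : R) : Prop :=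
  exists z, eigenfunction p k Lam z /\ is_even z.
Definition in_S_a (p k : nat) (Lam : R) : Prop :=
  exists z, eigenfunction p k Lam z /\ is_odd z.

(* Main.v *)
Require Import Defs.
From Stdlib Require Import Reals.
From Stdlib Require Import Lra Lia Classical.
From Coquelicot Require Coquelicot.
Open Scope R_scope.

Lemma deriv_ext f g x l : (forall y, Icl y -> f y = g y) -> Icl x ->
  deriv_on f x l -> deriv_on g x l.
Proof.
  intros E Hx D eps He. destruct (D eps He) as [d [Hd H]]. exists d; split; auto.
  intros h H0 H1 H2. rewrite <- (E _ H2), <- (E _ Hx). auto.
Qed.

Lemma cont_ext f g x : (forall y, Icl y -> f y = g y) -> Icl x ->
  cont_on f x -> cont_on g x.
Proof.
  intros E Hx D eps He. destruct (D eps He) as [d [Hd H]]. exists d; split; auto.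
  intros y H2 H1. rewrite <- (E _ H2), <- (E _ Hx). auto.
Qed.

Lemma deriv_unique f x l1 l2 : Icl x -> deriv_on f x l1 -> deriv_on f x l2 -> l1 = l2.
Proof.
  intros Hx D1 D2. destruct (Req_dec l1 l2) as [|Hne]; auto. exfalso.
  set (e := Rabs (l1 - l2) / 2).
  assert (He : 0 < e) by (unfold e; assert (l1 - l2 <> 0) by lra; pose proof (Rabs_pos_lt _ H); lra).
  destruct (D1 e He) as [d1 [Hd1 H1]]. destruct (D2 e He) as [d2 [Hd2 H2]].
  set (m := Rmin 1 (Rmin d1 d2) / 2).
  assert (Hm : 0 < m /\ m < d1 /\ m < d2 /\ m <= 1/2).
  { unfold m. pose proof (Rmin_l 1 (Rmin d1 d2)). pose proof (Rmin_r 1 (Rmin d1 d2)).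
    pose proof (Rmin_l d1 d2). pose proof (Rmin_r d1 d2).
    assert (0 < Rmin 1 (Rmin d1 d2)) by (apply Rmin_pos; [lra| apply Rmin_pos; lra]). lra. }
  unfold Icl in Hx.
  set (h := if Rle_dec x 0 then m else - m).
  assert (Hh : h <> 0 /\ Rabs h = m /\ Icl (x + h)).
  { unfold h, Icl; destruct (Rle_dec x 0).
    - rewrite Rabs_right; lra.
    - rewrite Rabs_Ropp, Rabs_right; lra. }
  destruct Hh as [Hh1 [Hh2 Hh3]].
  specialize (H1 h Hh1 ltac:(lra) Hh3). specialize (H2 h Hh1 ltac:(lra) Hh3).
  set (q := (f (x + h) - f x) / h) in *.
  assert (Rabs (l1 - l2) <= Rabs (q - l1) + Rabs (q - l2)).
  { replace (l1 - l2) with (-(q - l1) + (q - l2)) by ring.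
    rewrite <- (Rabs_Ropp (q - l1)). apply Rabs_triang. }
  unfold e in *; lra.
Qed.

Lemma deriv_cont f x l : deriv_on f x l -> cont_on f x.
Proof.
  intros D eps He. destruct (D 1 ltac:(lra)) as [d [Hd H]].
  assert (Hl : 0 < Rabs l + 1) by (pose proof (Rabs_pos l); lra).
  exists (Rmin d (eps / (Rabs l + 1))). split.
  { apply Rmin_pos; auto. apply Rdiv_lt_0_compat; lra. }
  intros y Hy Hyx. destruct (Req_dec y x) as [->|Hne].
  { replace (f x - f x) with 0 by ring. rewrite Rabs_R0; auto. }
  pose proof (Rmin_l d (eps / (Rabs l + 1))). pose proof (Rmin_r d (eps / (Rabs l + 1))).
  specialize (H (y - x) ltac:(lra) ltac:(lra) ltac:(replace (x + (y - x)) with y by ring; auto)).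
  replace (x + (y - x)) with y in H by ring.
  assert (Hq : Rabs ((f y - f x) / (y - x)) < Rabs l + 1).
  { replace ((f y - f x) / (y - x)) with (((f y - f x) / (y - x) - l) + l) by ring.
    pose proof (Rabs_triang ((f y - f x) / (y - x) - l) l). lra. }
  replace (f y - f x) with ((f y - f x) / (y - x) * (y - x)) by (field; lra).
  rewrite Rabs_mult.
  assert (Rabs (y - x) > 0) by (apply Rabs_pos_lt; lra).
  apply Rle_lt_trans with ((Rabs l + 1) * Rabs (y - x)).
  { apply Rmult_le_compat_r; lra. }
  assert (Rabs (y - x) < eps / (Rabs l + 1)) by lra.
  apply (Rmult_lt_compat_l (Rabs l + 1)) in H3; auto.
  replace ((Rabs l + 1) * (eps / (Rabs l + 1))) with eps in H3 by (field; lra). lra.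
Qed.

Lemma deriv_lin f g x l1 l2 a b : deriv_on f x l1 -> deriv_on g x l2 ->
  deriv_on (fun t => a * f t + b * g t) x (a * l1 + b * l2).
Proof.
  intros D1 D2 eps He.
  set (e := eps / (2 * (Rabs a + Rabs b + 1))).
  assert (Hk : 0 < Rabs a + Rabs b + 1) by (pose proof (Rabs_pos a); pose proof (Rabs_pos b); lra).
  assert (He' : 0 < e) by (unfold e; apply Rdiv_lt_0_compat; lra).
  destruct (D1 e He') as [d1 [Hd1 H1]]. destruct (D2 e He') as [d2 [Hd2 H2]].
  exists (Rmin d1 d2). split; [apply Rmin_pos; auto|].
  intros h Hh0 Hh Hi. pose proof (Rmin_l d1 d2). pose proof (Rmin_r d1 d2).
  specialize (H1 h Hh0 ltac:(lra) Hi). specialize (H2 h Hh0 ltac:(lra) Hi).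
  replace ((a * f (x + h) + b * g (x + h) - (a * f x + b * g x)) / h - (a * l1 + b * l2))
    with (a * ((f (x + h) - f x) / h - l1) + b * ((g (x + h) - g x) / h - l2)) by (field; auto).
  eapply Rle_lt_trans; [apply Rabs_triang|]. rewrite !Rabs_mult.
  assert (Rabs a * Rabs ((f (x + h) - f x) / h - l1) <= Rabs a * e)
    by (apply Rmult_le_compat_l; [apply Rabs_pos|lra]).
  assert (Rabs b * Rabs ((g (x + h) - g x) / h - l2) <= Rabs b * e)
    by (apply Rmult_le_compat_l; [apply Rabs_pos|lra]).
  assert ((Rabs a + Rabs b) * e < eps).
  { unfold e. apply Rmult_lt_reg_r with (2 * (Rabs a + Rabs b + 1)); [lra|].
    field_simplify; try lra. nra. }
  lra.
Qed.

Lemma deriv_neg f x l : Icl x -> deriv_on f (- x) l -> deriv_on (fun t => f (- t)) x (- l).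
Proof.
  intros Hx D eps He. destruct (D eps He) as [d [Hd H]]. exists d; split; auto.
  intros h Hh0 Hh Hi. unfold Icl in *.
  specialize (H (- h) ltac:(lra) ltac:(rewrite Rabs_Ropp; auto) ltac:(lra)).
  replace (- (x + h)) with (- x + - h) by ring.
  replace ((f (- x + - h) - f (- x)) / h - - l) with (- ((f (- x + - h) - f (- x)) / - h - l)) by (field; auto).
  rewrite Rabs_Ropp; auto.
Qed.

Lemma deriv_const c x : deriv_on (fun _ => c) x 0.
Proof.
  intros eps He. exists 1; split; [lra|]. intros h H0 _ _.
  replace ((c - c) / h - 0) with 0 by (field; auto). rewrite Rabs_R0; auto.
Qed.
Definition clamp (x : R) : R := Rmax (-1) (Rmin 1 x).

Lemma clamp_Icl x : Icl (clamp x).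
Proof. unfold clamp, Icl, Rmax, Rmin. repeat destruct Rle_dec; lra. Qed.

Lemma clamp_id x : Icl x -> clamp x = x.
Proof. unfold clamp, Icl, Rmax, Rmin. intros. repeat destruct Rle_dec; lra. Qed.

Lemma clamp_lip x y : Rabs (clamp y - clamp x) <= Rabs (y - x).
Proof.
  unfold clamp, Rmax, Rmin. repeat destruct Rle_dec;
  unfold Rabs; repeat destruct Rcase_abs; lra.
Qed.

Lemma clamp_cont f : (forall x, Icl x -> cont_on f x) ->
  forall x, continuity_pt (fun t => f (clamp t)) x.
Proof.
  intros C x. unfold continuity_pt, continue_in, limit1_in, limit_in. simpl. unfold R_dist.
  intros eps He. destruct (C (clamp x) (clamp_Icl x) eps He) as [d [Hd H]].
  exists d; split; auto. intros y [_ Hy]. apply H. apply clamp_Icl.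
  pose proof (clamp_lip x y). lra.
Qed.

Lemma const_on f : (forall x, Icl x -> cont_on f x) ->
  (forall x, Icl x -> deriv_on f x 0) -> forall a b, Icl a -> Icl b -> f a = f b.
Proof.
  intros C D a b Ha Hb.
  set (g := fun t => f (clamp t)).
  assert (Hg : forall t, Icl t -> g t = f t) by (intros; unfold g; rewrite clamp_id; auto).
  rewrite <- (Hg a Ha), <- (Hg b Hb).
  destruct (Coquelicot.Derive.MVT_gen g a b (fun _ => 0)) as [c [_ Hc]].
  - intros x Hx. apply Coquelicot.Derive.is_derive_Reals.
    assert (Hx' : -1 < x < 1).
    { unfold Icl in *. pose proof (Rmin_l a b); pose proof (Rmin_r a b);
      pose proof (Rmax_l a b); pose proof (Rmax_r a b).
      destruct (Rle_dec a b); [rewrite Rmin_left, Rmax_right in Hx|rewrite Rmin_right, Rmax_left in Hx]; lra. }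
    intros eps He. destruct (D x ltac:(unfold Icl; lra) eps He) as [d [Hd H]].
    assert (Hp : 0 < Rmin d (Rmin (1 - x) (1 + x))) by (repeat apply Rmin_pos; lra).
    exists (mkposreal _ Hp). simpl. intros h Hh0 Hh.
    pose proof (Rmin_l d (Rmin (1 - x) (1 + x))). pose proof (Rmin_r d (Rmin (1 - x) (1 + x))).
    pose proof (Rmin_l (1 - x) (1 + x)). pose proof (Rmin_r (1 - x) (1 + x)).
    assert (Icl (x + h)) by (unfold Icl; unfold Rabs in Hh; destruct Rcase_abs in Hh; lra).
    rewrite (Hg _ H4), (Hg x ltac:(unfold Icl; lra)). apply H; auto; lra.
  - intros; apply clamp_cont; auto.
  - lra.
Qed.

Lemma ftc (z w : R -> R) : (forall x, Icl x -> cont_on z x) ->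
  (forall x, Icl x -> exists pr : Riemann_integrable z (-1) x, w x = RiemannInt pr) ->
  forall x, Icl x -> deriv_on w x (z x).
Proof.
  intros C W x Hx.
  set (zc := fun t => z (clamp t)).
  assert (C0 : forall t, -1 <= t <= 1 -> continuity_pt zc t) by (intros; apply clamp_cont; auto).
  assert (h : -1 <= 1) by lra.
  pose proof (@RiemannInt_P28 zc (-1) 1 x h C0 Hx) as HP.
  set (P := primitive h (FTC_P1 h C0)) in HP.
  assert (EP : forall y, Icl y -> w y = P y).
  { intros y Hy. destruct (W y Hy) as [pr ->]. unfold P, primitive.
    destruct (Rle_dec (-1) y); [|unfold Icl in Hy; lra].
    destruct (Rle_dec y 1); [|unfold Icl in Hy; lra].
    apply RiemannInt_P18; [lra|]. intros t Ht. unfold zc. rewrite clamp_id; auto.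
    unfold Icl in *; lra. }
  assert (zc x = z x) by (unfold zc; rewrite clamp_id; auto).
  rewrite <- H.
  intros eps He. destruct (HP eps He) as [d Hd]. exists d; split; [apply cond_pos|].
  intros hh H1 H2 H3. rewrite (EP _ H3), (EP _ Hx). apply Hd; auto.
Qed.
Lemma pow_m1_sq n : (-1) ^ n * (-1) ^ n = 1.
Proof. rewrite <- Rpow_mult_distr. replace (-1 * -1) with 1 by ring. apply pow1. Qed.

Lemma part2 p n Lam z w : (1 <= p)%nat -> eigenfunction p n Lam z -> is_odd z ->
  (forall x, Icl x -> exists pr : Riemann_integrable z (-1) x, w x = RiemannInt pr) ->
  eigenfunction p (S n) Lam w /\ is_even w.
Proof.
  intros Hp [Hpn [d [[D0 [DD DC]] [[x0 [Hx0 Hz0]] [ODE BD]]]]] Hodd W.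
  assert (Cz : forall x, Icl x -> cont_on z x).
  { intros x Hx. apply (cont_ext (d 0%nat)); auto. eapply deriv_cont. apply DD; auto. lia. }
  assert (Wd : forall x, Icl x -> deriv_on w x (z x)) by (apply ftc; auto).
  assert (Icl0 : Icl 0) by (unfold Icl; lra).
  assert (IclN : forall x, Icl x -> Icl (- x)) by (unfold Icl; intros; lra).
  assert (Hev : is_even w).
  { set (g := fun t => 1 * w t + (-1) * w (- t)).
    assert (Dg : forall x, Icl x -> deriv_on g x 0).
    { intros x Hx. pose proof (deriv_lin _ _ x _ _ 1 (-1) (Wd x Hx)
        (deriv_neg w x (z (- x)) Hx (Wd (- x) (IclN x Hx)))) as H.
      rewrite (Hodd x Hx) in H. replace (1 * z x + -1 * - - z x) with 0 in H by ring. exact H. }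
    intros x Hx.
    pose proof (const_on g (fun y Hy => deriv_cont _ _ _ (Dg y Hy)) Dg x 0 Hx Icl0).
    unfold g in H. rewrite Ropp_0 in H. lra. }
  split; auto.
  set (c := (-1) ^ n * Lam * (-1) ^ (n - p)).
  assert (Hd2n : forall x, Icl x -> d (2 * n)%nat x = c * d (2 * n - 2 * p)%nat x).
  { intros x Hx. specialize (ODE x Hx). unfold c.
    replace (d (2 * n)%nat x) with ((-1) ^ n * ((-1) ^ n * d (2 * n)%nat x))
      by (rewrite <- Rmult_assoc, pow_m1_sq; ring).
    replace ((-1) ^ n * d (2 * n)%nat x) with (Lam * (-1) ^ (n - p) * d (2 * n - 2 * p)%nat x) by lra.
    ring. }
  set (e := fun j => if (j <=? 2 * n)%nat then d j else fun x => c * d (j - 2 * p)%nat x).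
  set (dw := fun j => match j with 0%nat => w | S j' => e j' end).
  assert (Ele : forall j, (j <= 2 * n)%nat -> e j = d j).
  { intros j Hj. unfold e. destruct (Nat.leb_spec j (2 * n)); auto; lia. }
  assert (Egt : e (S (2 * n)) = fun x => c * d (S (2 * n) - 2 * p)%nat x).
  { unfold e. destruct (Nat.leb_spec (S (2 * n)) (2 * n)); auto; lia. }
  split; [lia|]. exists dw. split; [split; [|split]|split; [|split]].
  - intros; reflexivity.
  - intros j x Hj Hx. destruct j as [|j]; simpl.
    + rewrite Ele by lia. rewrite D0 by auto. auto.
    + destruct (Nat.eq_dec j (2 * n)) as [->|Hne].
      * rewrite Egt, Ele by lia.
        apply (deriv_ext (fun t => c * d (2 * n - 2 * p)%nat t + 0 * d 0%nat t)).
        { intros y Hy. rewrite Hd2n by auto. ring. }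
        auto.
        replace (c * d (S (2 * n) - 2 * p)%nat x) with (c * d (S (2 * n - 2 * p)) x + 0 * d 1%nat x)
          by (replace (S (2 * n) - 2 * p)%nat with (S (2 * n - 2 * p)) by lia; ring).
        apply deriv_lin; apply DD; auto; lia.
      * rewrite !Ele by lia. apply DD; auto; lia.
  - intros x Hx. replace (2 * S n)%nat with (S (S (2 * n))) by lia. simpl.
    change (cont_on (e (S (2 * n))) x). rewrite Egt.
    apply (cont_ext (fun t => c * d (S (2 * n - 2 * p)) t + 0 * d 0%nat t)); auto.
    { intros y _. replace (S (2 * n) - 2 * p)%nat with (S (2 * n - 2 * p)) by lia. ring. }
    eapply deriv_cont. apply deriv_lin; apply DD; auto; lia.
  - apply NNPP. intro Hn. apply Hz0.
    assert (Hw0 : forall x, Icl x -> w x = 0).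
    { intros x Hx. apply NNPP. intro. apply Hn. exists x; auto. }
    apply (deriv_unique w x0); auto.
    apply (deriv_ext (fun _ => 0)); auto. { intros; rewrite Hw0; auto. }
    apply deriv_const.
  - intros x Hx. replace (2 * S n)%nat with (S (S (2 * n))) by lia.
    replace (S (S (2 * n)) - 2 * p)%nat with (S (S (2 * n) - 2 * p)) by lia. replace (S n - p)%nat with (S (n - p)) by lia.
    change ((-1)^(S n) * e (S (2*n)) x - Lam * (-1)^(S (n-p)) * e (S (2*n) - 2*p)%nat x = 0).
    rewrite Egt, Ele by lia.
    replace (S (2 * n) - 2 * p)%nat with (S (2 * n - 2 * p)) by lia.
    unfold c. cbn [pow].
    transitivity (-(Lam * (-1)^(n-p) * d (S (2 * n - 2 * p)) x) * ((-1)^n*(-1)^n - 1)); [ring|].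
    rewrite pow_m1_sq. ring.
  - intros j Hj. destruct j as [|j]; simpl.
    + assert (w (-1) = 0).
      { destruct (W (-1) ltac:(unfold Icl; lra)) as [pr ->]. apply RiemannInt_P9. }
      split; auto. rewrite <- (Hev 1) by (unfold Icl; lra). auto.
    + rewrite Ele by lia. apply BD. lia.
Qed.
Lemma parity m w dw : Cm_derivs m w dw -> is_even w ->
  forall j, (j <= m)%nat -> forall x, Icl x -> dw j (-x) = (-1)^j * dw j x.
Proof.
  intros [D0 [DD DC]] Hev. induction j as [|j IH]; intros Hj x Hx.
  - simpl. rewrite !D0 by (auto; unfold Icl in *; lra). rewrite Hev; auto; ring.
  - assert (Hx' : Icl (- x)) by (unfold Icl in *; lra).
    pose proof (deriv_neg (dw j) x _ Hx (DD j (- x) ltac:(lia) Hx')) as H1.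
    assert (H2 : deriv_on (fun t => dw j (- t)) x ((-1)^j * dw (S j) x + 0 * 0)).
    { apply (deriv_ext (fun t => (-1)^j * dw j t + 0 * (fun _ => 0) t)); auto.
      { intros y Hy. rewrite IH; auto. ring. lia. }
      apply deriv_lin. apply DD; auto; lia. apply deriv_const. }
    pose proof (deriv_unique _ _ _ _ Hx H1 H2). simpl. lra.
Qed.

Lemma part3 p n Lam w v : (1 <= p)%nat -> (p <= n)%nat ->
  eigenfunction p (S n) Lam w -> is_even w ->
  (forall x, Icl x -> deriv_on w x (v x)) -> eigenfunction p n Lam v /\ is_odd v.
Proof.
  intros Hp Hpn [_ [dw [Cw [[x0 [Hx0 Hw0]] [ODE BD]]]]] Hev V.
  pose proof (parity _ _ _ Cw Hev) as Par.
  destruct Cw as [D0 [DD DC]].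
  assert (Icl0 : Icl 0) by (unfold Icl; lra).
  assert (IclN : forall x, Icl x -> Icl (- x)) by (unfold Icl; intros; lra).
  assert (Vd : forall x, Icl x -> v x = dw 1%nat x).
  { intros x Hx. apply (deriv_unique w x); auto. apply (deriv_ext (dw 0%nat)); auto.
    apply DD; auto; lia. }
  assert (Hodd : is_odd v).
  { intros x Hx. rewrite !Vd; auto. rewrite Par; auto; [simpl; ring|lia]. }
  split; auto. split; auto. exists (fun j => dw (S j)).
  split; [split; [|split]|split; [|split]].
  - intros x Hx. symmetry; auto.
  - intros j x Hj Hx. apply DD; auto; lia.
  - intros x Hx. eapply deriv_cont. apply DD; auto; lia.
  - apply NNPP. intro Hn. apply Hw0.
    assert (Hv0 : forall x, Icl x -> deriv_on w x 0).
    { intros x Hx. replace 0 with (v x). auto. apply NNPP. intro. apply Hn. exists x.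
      split; auto. }
    rewrite (const_on w (fun y Hy => deriv_cont _ _ _ (Hv0 y Hy)) Hv0 x0 1 Hx0 ltac:(unfold Icl; lra)).
    rewrite <- D0 by (unfold Icl; lra). apply BD. lia.
  - set (G := fun t => (-1)^n * dw (S (2 * n)) t + (- Lam * (-1)^(n-p)) * dw (S (2 * n - 2 * p)) t).
    assert (DG : forall x, Icl x -> deriv_on G x 0).
    { intros x Hx. specialize (ODE x Hx).
      replace (2 * S n)%nat with (S (S (2 * n))) in ODE by lia.
      replace (S (S (2 * n)) - 2 * p)%nat with (S (S (2 * n - 2 * p))) in ODE by lia.
      replace (S n - p)%nat with (S (n - p)) in ODE by lia.
      cbn [pow] in ODE.
      replace 0 with ((-1)^n * dw (S (S (2 * n))) x + (- Lam * (-1)^(n-p)) * dw (S (S (2 * n - 2 * p))) x) by lra.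
      apply deriv_lin; apply DD; auto; lia. }
    assert (G0 : G 0 = 0).
    { assert (G (- 0) = - G 0).
      { unfold G. rewrite !Par; auto; try lia.
        replace (S (2 * n)) with (1 + 2 * n)%nat by lia.
        replace (S (2 * n - 2 * p)) with (1 + 2 * (n - p))%nat by lia.
        rewrite !pow_add, !pow_mult. replace ((-1)^2) with 1 by ring. rewrite !pow1. ring. }
      rewrite Ropp_0 in H. lra. }
    intros x Hx.
    pose proof (const_on G (fun y Hy => deriv_cont _ _ _ (DG y Hy)) DG x 0 Hx Icl0).
    rewrite G0 in H. unfold G in H.
    lra.
  - intros j Hj. apply BD. lia.
Qed.
Theorem mainTheorem6 (p n : nat) (Hp : (1 <= p)%nat) (Hn : (p <= n)%nat) :
  (forall Lam : R, in_S_a p n Lam <-> in_S_s p (S n) Lam) /\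
  (forall (Lam : R) (z w : R -> R),
     eigenfunction p n Lam z -> is_odd z ->
     (forall x, Icl x -> exists pr : Riemann_integrable z (-1) x,
                          w x = RiemannInt pr) ->
     eigenfunction p (S n) Lam w /\ is_even w) /\
  (forall (Lam : R) (w v : R -> R),
     eigenfunction p (S n) Lam w -> is_even w ->
     (forall x, Icl x -> deriv_on w x (v x)) ->
     eigenfunction p n Lam v /\ is_odd v).
Proof.
  split; [|split; [intros; eapply part2; eauto|intros; eapply part3; eauto]].
  intros Lam. split.
  - intros [z [E Hodd]].
    set (zc := fun t => z (clamp t)).
    assert (Ezc : forall x, Icl x -> zc x = z x) by (intros; unfold zc; rewrite clamp_id; auto).
    assert (E' : eigenfunction p n Lam zc /\ is_odd zc).
    { destruct E as [Hpn [d [[D0 DDC] [[x0 [Hx0 Hz0]] R]]]]. split.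
      - split; auto. exists d. split; [split; auto|split; auto].
        + intros; rewrite Ezc; auto.
        + exists x0; rewrite Ezc; auto.
      - intros x Hx. rewrite !Ezc; auto; unfold Icl in *; lra. }
    destruct E' as [E' Hodd'].
    assert (Cz : forall x, Icl x -> cont_on z x).
    { destruct E as [Hpn [d [[D0 [DD DC]] _]]]. intros x Hx.
      apply (cont_ext (d 0%nat)); auto. eapply deriv_cont. apply DD; auto. lia. }
    assert (C : forall x, continuity_pt zc x) by (apply clamp_cont; auto).
    assert (prf : forall x, Riemann_integrable zc (-1) x).
    { intros x. destruct (Rle_dec (-1) x).
      - apply continuity_implies_RiemannInt; auto.
      - apply RiemannInt_P1, continuity_implies_RiemannInt; auto; lra. }
    exists (fun x => RiemannInt (prf x)).
    apply (part2 p n Lam zc); auto. intros x _. exists (prf x); auto.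
  - intros [w [E Hev]].
    destruct E as [Hpn [dw [[D0 [DD DC]] R]]] eqn:EE.
    exists (dw 1%nat). apply (part3 p n Lam w); auto.
    intros x Hx. apply (deriv_ext (dw 0%nat)); auto. apply DD; auto; lia.
Qed.
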